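(* Let $m=p_1^{m_1}\cdots p_k^{m_k}$ and let $(K_n,\alpha)$ be an edge-labeled complete graph over $\mathbb{Z}/m\mathbb{Z}$ with ordered edge labels $a_1,\dots,a_{r_n}$, where each $a_s=p_1^{n_{s1}}\cdots p_k^{n_{sk}}$ with $0\le n_{sj}\le m_j$ is a positive divisor of $m$ representing a zero divisor of $\mathbb{Z}/m\mathbb{Z}$. (1) If $a_{r_n}\mid a_{r_n-1}\mid\cdots\mid a_2\mid a_1\mid m$ and $m\neq a_1$, then the set $B_m$ consisting of $(1,1,\dots,1)$ together with, for each $k=2,\dots,n$, the vector whose $v_k$-entry is $a_{r_{k-1}+1}$ and all other entries are $0$ (i.e. $(0,a_1,0,\dots,0)$, $(0,0,a_2,0,\dots,0)$, $(0,0,0,a_4,0,\dots,0)$, $\dots$, $(0,\dots,0,a_{r_{n-1}+1})$), is a minimum flow-up generating set of $[\mathbb{Z}/m\mathbb{Z}]_{(K_n,\alpha)}$; thus its rank is $n$. (2) If $a_1\mid a_2\mid\cdots\mid a_{r_n}\mid m$ and $m\ne a_{r_n}$, then the set $B_m$ consisting of $(1,1,\dots,1)$ together with, for each $k=2,\dots,n$, the vector whose entries at $v_k,v_{k+1},\dots,v_n$ equal $a_{r_n-(n-k)}$ and whose entries at $v_1,\dots,v_{k-1}$ are $0$, is a minimum flow-up generating set of $[\mathbb{Z}/m\mathbb{Z}]_{(K_n,\alpha)}$; thus its rank is $n$.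
   Context: A spline on an edge-labeled graph $(G,\alpha)$ over $\mathbb{Z}/m\mathbb{Z}$ (edges labeled by nonzero ideals) is a vector $(f_{v_1},\dots,f_{v_n})\in(\mathbb{Z}/m\mathbb{Z})^n$ with $f_{v_i}-f_{v_j}\in\alpha(v_iv_j)$ for every edge; the splines form a $\mathbb{Z}$-module $[\mathbb{Z}/m\mathbb{Z}]_{(G,\alpha)}$. An $i$-th flow-up class is a spline with $f_{v_i}\ne0$ and $f_{v_t}=0$ for $t<i$. A minimum generating set is a generating set of the $\mathbb{Z}$-module of smallest possible size, this size being the rank; a minimum flow-up generating set is a minimum generating set consisting of flow-up classes. $K_n$ is the complete graph on $v_1,\dots,v_n$; $r_k=k(k-1)/2$. The edges are enumerated so that for $1\le j<k\le n$ the edge $v_jv_k$ is $e_{r_{k-1}+j}$ (so $e_1=v_1v_2$, $e_2=v_1v_3$, $e_3=v_2v_3$, $e_4=v_1v_4,\dots$). ''Ordered edge labels $a_1,\dots,a_{r_n}$'' means $\alpha(e_s)$ is the ideal generated by $a_s+m\mathbb{Z}$. Vectors are written $(f_{v_1},\dots,f_{v_n})$. *)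

(* Defs.v *)
From mathcomp Require Import all_boot all_algebra.
Set Implicit Arguments. Unset Strict Implicit. Unset Printing Implicit Defensive.
Import GRing.Theory.
Local Open Scope ring_scope.

Definition r (k : nat) : nat := ((k * k.-1) %/ 2)%N.

(* Vertices v_1..v_n are the ordinals 0..n-1 of 'I_n.  For 0-indexed i < l,
   the edge v_{i+1} v_{l+1} is e_{r_l + i + 1}. *)
Definition edge_index (i l : nat) : nat := (r l + i.+1)%N.

Definition in_ideal_gen (R : comPzRingType) (x y : R) : Prop := exists z : R, y = z * x.

Definition zero_divisor (R : pzRingType) (x : R) : Prop := exists y : R, y != 0 /\ x * y = 0.

Definition vec (m n : nat) := {ffun 'I_n -> 'Z_m}.

Definition is_spline (m n : nat) (a : nat -> nat) (f : vec m n) : Prop :=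
  forall i l : 'I_n, (i < l)%N -> in_ideal_gen ((a (edge_index i l))%:R : 'Z_m) (f i - f l).

Definition zspan (m n : nat) (S : {set vec m n}) (f : vec m n) : Prop :=
  exists c : vec m n -> int, f = \sum_(g in S) g *~ c g.

Definition generates (m n : nat) (a : nat -> nat) (S : {set vec m n}) : Prop :=
  (forall g, g \in S -> is_spline a g) /\ (forall f, is_spline a f <-> zspan S f).

Definition min_gen_set (m n : nat) (a : nat -> nat) (S : {set vec m n}) : Prop :=
  generates a S /\ (forall S' : {set vec m n}, generates a S' -> (#|S| <= #|S'|)%N).

(* i-th flow-up class (i 0-indexed) *)
Definition flow_up_class (m n : nat) (i : 'I_n) (f : vec m n) : Prop :=
  f i != 0 /\ (forall t : 'I_n, (t < i)%N -> f t = 0).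

Definition is_flow_up (m n : nat) (f : vec m n) : Prop := exists i : 'I_n, flow_up_class i f.

Definition min_flow_up_gen_set (m n : nat) (a : nat -> nat) (S : {set vec m n}) : Prop :=
  min_gen_set a S /\ (forall g, g \in S -> is_flow_up g).

Definition ones (m n : nat) : vec m n := [ffun _ => 1].

(* part (1): (1,...,1) and, for k = l+1 = 2..n, a_{r_{k-1}+1} at v_k *)
Definition B1 (m n : nat) (a : nat -> nat) : {set vec m n} :=
  ones m n |: [set [ffun j : 'I_n => if j == l then ((a (r l + 1)%N)%:R : 'Z_m) else 0]
               | l : 'I_n & (0 < l)%N].

(* part (2): (1,...,1) and, for k = l+1 = 2..n, a_{r_n-(n-k)} at v_k..v_n *)
Definition B2 (m n : nat) (a : nat -> nat) : {set vec m n} :=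
  ones m n |: [set [ffun j : 'I_n => if (l <= j)%N then ((a (r n - (n - l.+1))%N)%:R : 'Z_m) else 0]
               | l : 'I_n & (0 < l)%N].

(* Main.v *)
Require Import Defs.
From mathcomp Require Import all_boot all_algebra.
From mathcomp Require Import zify.
Import GRing.Theory.
Local Open Scope ring_scope.

Lemma rE k : r k = 'C(k, 2).
Proof. by rewrite /r bin2 divn2. Qed.

Lemma rS k : r k.+1 = (r k + k)%N.
Proof. by rewrite !rE binS bin1. Qed.

Lemma r_mono k l : (k <= l)%N -> (r k <= r l)%N.
Proof.
move=> kl; rewrite -(subnKC kl); elim: (l - k)%N => [|d IH]; first by rewrite addn0.
by rewrite addnS rS; apply: leq_trans IH (leq_addr _ _).
Qed.

Section Ideal.
Variable R : comPzRingType.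
Lemma ideal0 (x : R) : in_ideal_gen x 0.
Proof. by exists 0; rewrite mul0r. Qed.
Lemma idealD (x y z : R) : in_ideal_gen x y -> in_ideal_gen x z -> in_ideal_gen x (y + z).
Proof. by move=> [u ->] [v ->]; exists (u + v); rewrite mulrDl. Qed.
Lemma idealN (x y : R) : in_ideal_gen x y -> in_ideal_gen x (- y).
Proof. by move=> [u ->]; exists (- u); rewrite mulNr. Qed.
Lemma idealB (x y z : R) : in_ideal_gen x y -> in_ideal_gen x z -> in_ideal_gen x (y - z).
Proof. by move=> ? ?; apply: idealD => //; apply: idealN. Qed.
Lemma idealZ (x y : R) k : in_ideal_gen x y -> in_ideal_gen x (y *~ k).
Proof. by move=> [u ->]; exists (u *~ k); rewrite mulrzAl. Qed.
Lemma ideal_self (x : R) : in_ideal_gen x x.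
Proof. by exists 1; rewrite mul1r. Qed.
Lemma ideal_dvd (x y : nat) (w : R) : in_ideal_gen (y%:R) w -> (x %| y)%N -> in_ideal_gen (x%:R) w.
Proof.
move=> [u ->] /dvdnP [k ->]; exists (u * k%:R); by rewrite natrM mulrA.
Qed.
End Ideal.

Lemma splineD M n a (f g : vec M n) : is_spline a f -> is_spline a g -> is_spline a (f + g).
Proof.
move=> Hf Hg i l il; rewrite !ffunE.
have -> : f i + g i - (f l + g l) = (f i - f l) + (g i - g l) by rewrite addrACA opprD.
by apply: idealD; [apply: Hf | apply: Hg].
Qed.
Lemma splineN M n a (f : vec M n) : is_spline a f -> is_spline a (- f).
Proof.
move=> Hf i l il; rewrite !ffunE -opprD; by apply: idealN; apply: Hf.
Qed.
Lemma splineZ M n a (f : vec M n) k : is_spline a f -> is_spline a (f *~ k).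
Proof.
move=> Hf i l il; rewrite !ffunMzE -mulrzBl; by apply: idealZ; apply: Hf.
Qed.
Lemma spline0 M n a : is_spline a (0 : vec M n).
Proof. move=> i l il; rewrite !ffunE subr0; exact: ideal0. Qed.
Lemma splineB M n a (f g : vec M n) : is_spline a f -> is_spline a g -> is_spline a (f - g).
Proof. by move=> ? ?; apply: splineD => //; apply: splineN. Qed.

Lemma spline_sum M n a (I : finType) (P : pred I) (F : I -> vec M n) :
  (forall i, P i -> is_spline a (F i)) -> is_spline a (\sum_(i | P i) F i).
Proof.
move=> H; apply: (big_ind (fun x => is_spline a x)) => //.
- exact: spline0.
- by move=> ? ? ? ?; apply: splineD.
Qed.

Lemma zspan0 M n (S : {set vec M n}) : zspan S 0.
Proof. exists (fun _ => 0); by rewrite big1 // => g _; rewrite mulr0z. Qed.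
Lemma zspanD M n (S : {set vec M n}) f g : zspan S f -> zspan S g -> zspan S (f + g).
Proof.
move=> [c1 ->] [c2 ->]; exists (fun x => c1 x + c2 x).
by rewrite -big_split /=; apply: eq_bigr => x _; rewrite mulrzDr.
Qed.
Lemma zspanZ M n (S : {set vec M n}) f k : zspan S f -> zspan S (f *~ k).
Proof.
move=> [c ->]; exists (fun x => c x * k).
rewrite mulrz_suml; apply: eq_bigr => x _; by rewrite mulrzA.
Qed.
Lemma zspan_mem M n (S : {set vec M n}) g : g \in S -> zspan S g.
Proof.
move=> gS; exists (fun x => if x == g then 1 else 0).
rewrite (bigD1 g) //= eqxx big1 ?addr0 // => x /andP [_ /negbTE ->].
by rewrite mulr0z.
Qed.

Lemma gen_all (m n : nat) a (G : 'I_n -> vec m.+2 n) (c : 'I_n -> nat) (pi : 'I_n -> 'I_n) (S : {set vec m.+2 n}) :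
  (forall l, G l \in S) ->
  (forall l, is_spline a (G l)) ->
  (forall (l i : 'I_n), (i < l)%N -> G l i = 0) ->
  (forall l, G l l = (c l)%:R) ->
  (forall f (j : 'I_n), is_spline a f -> exists z : 'Z_m.+2, f j - (if (j:nat) == 0%N then 0 else f (pi j)) = z * (c j)%:R) ->
  (forall j : 'I_n, (0 < j)%N -> (pi j < j)%N) ->
  forall f, is_spline a f -> zspan S f.
Proof.
move=> GS Gs Gl Gc H5 Hpi.
suff H : forall d f, is_spline a f -> (forall i : 'I_n, (i < n - d)%N -> f i = 0) -> zspan S f.
  by move=> f fs; apply: (H n) => // i; rewrite subnn.
elim=> [|d IH] f fs fz.
  have -> : f = 0 by apply/ffunP => i; rewrite ffunE fz // subn0.
  exact: zspan0.
have [dn|dn] := ltnP d n; last first.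
  apply: IH => // i; have -> : (n - d = n - d.+1)%N by lia.
  exact: fz.
set k := (n - d.+1)%N.
have kn : (k < n)%N by rewrite /k; lia.
pose kk := Ordinal kn.
have [z Hz] := H5 f kk fs.
have fk : f kk = z * (c kk)%:R.
  rewrite -Hz; case: ifP => [_|/negbT k0]; first by rewrite subr0.
  have h : (pi kk < kk)%N by apply: Hpi; rewrite lt0n.
  rewrite /= in h; rewrite (fz (pi kk)) ?subr0 //.
set f' := f - G kk *~ (z : nat).
have -> : f = f' + G kk *~ (z : nat) by rewrite /f' subrK.
apply: zspanD; last by apply: zspanZ; apply: zspan_mem.
apply: IH; first by apply: splineB => //; apply: splineZ.
move=> i il; rewrite /f' !ffunE ffunMzE.
case: (ltnP i k) => ik.
  by rewrite fz // Gl // mul0rz subr0.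
have -> : i = kk by apply: val_inj; rewrite /= -/k; lia.
have zz : ((z:nat)%:R : 'Z_m.+2) = z by apply: natr_Zp.
by rewrite Gc fk -pmulrn -[X in _ - X]mulr_natr zz mulrC subrr.
Qed.

Definition Phi M n (pi : 'I_n -> 'I_n) (d : 'I_n -> nat) (f : vec M n) : vec M n :=
  [ffun j => (f j - (if (j:nat) == 0%N then 0 else f (pi j))) * (d j)%:R].
Arguments Phi {M n}.

Lemma PhiD M n pi d (f g : vec M n) : Phi pi d (f + g) = Phi pi d f + Phi pi d g.
Proof.
apply/ffunP => j; rewrite !ffunE -mulrDl; congr (_ * _).
case: ifP => _; first by rewrite !subr0.
by rewrite ?ffunE opprD addrACA.
Qed.

Lemma Phi0 M n pi d : Phi pi d (0 : vec M n) = 0.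
Proof. apply/ffunP => j; rewrite !ffunE; case: ifP => _; by rewrite ?ffunE !subr0 mul0r. Qed.

Lemma PhiZ M n pi d (f : vec M n) k : Phi pi d (f *~ k) = Phi pi d f *~ k.
Proof.
apply/ffunP => j; rewrite ffunMzE !ffunE -mulrzAl; congr (_ * _).
case: ifP => _; first by rewrite !subr0 ffunMzE.
by rewrite !ffunMzE mulrzBl.
Qed.

Lemma Phi_comb M n pi d (S : {set vec M n}) (cz : vec M n -> int) :
  Phi pi d (\sum_(g in S) g *~ cz g) = \sum_(g in S) Phi pi d g *~ cz g.
Proof.
rewrite (big_morph (Phi pi d) (@PhiD M n pi d) (@Phi0 M n pi d)).
by apply: eq_bigr => g _; rewrite PhiZ.
Qed.

Lemma natr_neq0 m c : (0 < c < m.+2)%N -> (c%:R : 'Z_m.+2) != 0.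
Proof.
move=> /andP [c0 cm]; apply/eqP => /(congr1 val).
rewrite /= val_Zp_nat // modn_small // => c00; by rewrite c00 in c0.
Qed.

Arguments natr_neq0 {m c}.

Lemma lower m n a pi d p q (S : {set vec m.+2 n}) (G : 'I_n -> vec m.+2 n) :
  (1 < p.+1)%N -> (q * p.+1 = m.+2)%N ->
  generates a S ->
  (forall l, is_spline a (G l)) ->
  (forall g : vec m.+2 n, is_spline a g -> Phi pi d g *+ p.+1 = 0) ->
  (forall l, Phi pi d (G l) = [ffun j => if j == l then (q%:R : 'Z_m.+2) else 0]) ->
  (n <= #|S|)%N.
Proof.
move=> p1 qp [Ss Sg] Gs Hp HG.
pose T (t : {ffun 'I_n -> 'I_p.+1}) := \sum_l G l *~ (t l : nat).
have Ts t : is_spline a (T t) by apply: spline_sum => l _; apply: splineZ.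
have PT t : Phi pi d (T t) = [ffun j => ((q * t j)%N%:R : 'Z_m.+2)].
  rewrite /T (big_morph (Phi pi d) (@PhiD _ n pi d) (@Phi0 _ n pi d)).
  apply/ffunP => j; rewrite sum_ffunE ffunE (bigD1 j) //= big1 ?addr0.
    by rewrite PhiZ ffunMzE HG ffunE eqxx -pmulrn natrM mulr_natr.
  by move=> l /negbTE jl; rewrite PhiZ ffunMzE HG ffunE eq_sym jl mul0rz.
have q0 : (0 < q)%N by rewrite lt0n; apply/eqP => q0; rewrite q0 in qp.
have inj : injective (fun t => Phi pi d (T t)).
  move=> t t' /=; rewrite !PT => /ffunP H; apply/ffunP => j.
  have := H j; rewrite !ffunE => /(congr1 val) /=.
  have lt x : (x < p.+1)%N -> (q * x < m.+2)%N by move=> xp; rewrite -qp ltn_pmul2l.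
  rewrite !val_Zp_nat // !modn_small ?lt //.
  by move/eqP; rewrite eqn_pmul2l // => /eqP /val_inj.
pose F (c : {ffun 'I_#|S| -> 'I_p.+1}) := \sum_(i < #|S|) Phi pi d (enum_val i) *+ c i.
have sub : codom (fun t => Phi pi d (T t)) \subset codom F.
  apply/subsetP => x /codomP [t ->].
  have [cz Hc] := (Sg (T t)).1 (Ts t).
  rewrite Hc Phi_comb big_enum_val.
  apply/codomP; exists [ffun i => inord (absz (cz (enum_val i) %% p.+1)%Z)].
  rewrite /F; apply: eq_bigr => i _; rewrite ffunE.
  have gS : enum_val i \in S := enum_valP i.
  set g := enum_val i; set z := cz g.
  have z0 : (0 <= (z %% p.+1)%Z)%R by apply: modz_ge0.
  have zp : ((z %% p.+1)%Z < p.+1%:Z)%R by apply: ltz_pmod.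
  rewrite inordK; last by lia.
  rewrite {1}(divz_eq z p.+1) mulrzDr -mulrzA_C -pmulrn Hp ?mul0rz ?add0r; last exact: Ss.
  by rewrite pmulrn gez0_abs.
have := subset_leq_card sub.
rewrite card_codom // card_ffun !card_ord.
move/leq_trans => /(_ _ (card_size _)); rewrite size_codom card_ffun !card_ord.
by rewrite leq_exp2l.
Qed.

Lemma generic m n a (G : 'I_n -> vec m.+2 n) (c : 'I_n -> nat) (pi : 'I_n -> 'I_n) (d : 'I_n -> nat) p :
  (1 < p.+1)%N -> (p.+1 %| m.+2)%N ->
  (forall l, is_spline a (G l)) ->
  (forall (l i : 'I_n), (i < l)%N -> G l i = 0) ->
  (forall l, G l l = (c l)%:R) ->
  (forall l, 0 < c l < m.+2)%N ->
  (forall f (j : 'I_n), is_spline a f -> exists z : 'Z_m.+2, f j - (if (j:nat) == 0%N then 0 else f (pi j)) = z * (c j)%:R) ->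
  (forall j : 'I_n, (0 < j)%N -> (pi j < j)%N) ->
  (forall l j : 'I_n, G l j - (if (j:nat) == 0%N then 0 else G l (pi j)) = if j == l then (c l)%:R else 0) ->
  (forall j, c j * p.+1 * d j = m.+2)%N ->
  min_flow_up_gen_set a [set G l | l : 'I_n] /\ #|[set G l | l : 'I_n]| = n.
Proof.
move=> p1 pM Gs Gl Gc cb H5 Hpi H7 Hd.
have Ginj : injective G.
  move=> l l' E; apply: val_inj; case: (ltngtP l l') => // h.
    have := Gl l' l h; rewrite -E Gc => /eqP; by rewrite (negbTE (natr_neq0 (cb l))).
  have := Gl l l' h; rewrite E Gc => /eqP; by rewrite (negbTE (natr_neq0 (cb l'))).
have cardS : #|[set G l | l : 'I_n]| = n by rewrite card_imset // card_ord.
have gen : generates a [set G l | l : 'I_n].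
  split; first by move=> g /imsetP [l _ ->].
  move=> f; split.
    by apply: (@gen_all m n a G c pi) => // l; apply: imset_f.
  move=> [cz ->]; apply: spline_sum => g /imsetP [l _ ->]; exact: splineZ.
split=> //; split; last first.
  move=> g /imsetP [l _ ->]; exists l; split; first by rewrite Gc natr_neq0.
  by move=> t tl; apply: Gl.
split=> // S' genS'; rewrite cardS.
apply: (@lower m n a pi d p (m.+2 %/ p.+1)%N S' G p1) => //.
- by rewrite divnK.
- move=> g gs; apply/ffunP => j; rewrite ffunMnE !ffunE.
  have [z ->] := H5 g j gs.
  rewrite -[X in X = _]mulr_natr -!mulrA -!natrM.
  have -> : (c j * (d j * p.+1) = m.+2)%N by rewrite -(Hd j) mulnA mulnAC.
  by rewrite pchar_Zp // mulr0.
- move=> l; apply/ffunP => j; rewrite !ffunE H7.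
  case: eqP => [->|_]; last by rewrite mul0r.
  rewrite -natrM; congr (_%:R).
  by rewrite -(Hd l) mulnAC mulnK.
Qed.

Lemma chain_dec (a : nat -> nat) R : (forall s, (1 <= s < R)%N -> (a s.+1 %| a s)%N) ->
  forall s s', (1 <= s)%N -> (s <= s')%N -> (s' <= R)%N -> (a s' %| a s)%N.
Proof.
move=> H s; elim=> [|s' IH] s1 ss sR; first by move: s1; rewrite leqn0 in ss; rewrite (eqP ss).
case: (ltngtP s s'.+1) ss => // [ss _|-> //].
apply: dvdn_trans (IH s1 _ _); [apply: H | by [] | ]; lia.
Qed.

Lemma chain_inc (a : nat -> nat) R : (forall s, (1 <= s < R)%N -> (a s %| a s.+1)%N) ->
  forall s s', (1 <= s)%N -> (s <= s')%N -> (s' <= R)%N -> (a s %| a s')%N.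
Proof.
move=> H s; elim=> [|s' IH] s1 ss sR; first by move: s1; rewrite leqn0 in ss; rewrite (eqP ss).
case: (ltngtP s s'.+1) ss => // [ss _|-> //].
apply: dvdn_trans (IH s1 _ _) _; [by [] | lia | apply: H; lia].
Qed.

Lemma edge_le n (i l : nat) : (i < l)%N -> (l < n)%N -> (1 <= edge_index i l <= r n)%N.
Proof.
move=> il ln; rewrite /edge_index addn_gt0 /= orbT /=.
have := r_mono _ _ ln; rewrite rS; lia.
Qed.

Lemma rn_ge1 n : (2 <= n)%N -> (1 <= r n)%N.
Proof. move=> n2; have := r_mono _ _ n2; by rewrite rE. Qed.

Arguments chain_dec {a R}. Arguments chain_inc {a R}. Arguments edge_le {n i l}.
Arguments rn_ge1 {n}. Arguments ideal_dvd {R x y w}. Arguments ideal_self {R x}.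
Arguments r_mono {k l}.

Lemma prime_setup m (A : nat) : (0 < A)%N -> (A %| m.+2)%N -> A <> m.+2 ->
  exists p, [/\ (1 < p.+1)%N, (A * p.+1 %| m.+2)%N & (p.+1 %| m.+2)%N].
Proof.
move=> A0 Am Ane.
have q1 : (1 < m.+2 %/ A)%N.
  have := divnK Am; case: (m.+2 %/ A)%N => [|[|k]] //; rewrite ?mul1n //; lia.
have pr := pdiv_prime q1.
have [p pE] : exists p, pdiv (m.+2 %/ A) = p.+1.
  by exists (pdiv (m.+2 %/ A)).-1; rewrite prednK // prime_gt0.
have ApM : (A * p.+1 %| m.+2)%N.
  by rewrite -{1}(divnK Am) mulnC dvdn_mul // -pE pdiv_dvd.
exists p; split => //; first by rewrite -pE prime_gt1.
by apply: dvdn_trans ApM; apply: dvdn_mull.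
Qed.

Arguments prime_setup {m A}.

Lemma part1 m n a : (2 <= n)%N ->
  (forall s, (1 <= s <= r n)%N -> (0 < a s)%N) ->
  (forall s, (1 <= s < r n)%N -> (a s.+1 %| a s)%N) ->
  (a 1 %| m.+2)%N -> a 1 <> m.+2 ->
  min_flow_up_gen_set a (B1 m.+2 n a) /\ #|B1 m.+2 n a| = n.
Proof.
move=> n2 Hpos Hdec a1m a1ne.
have rn1 := rn_ge1 n2.
have n0 : (0 < n)%N by lia.
pose o := Ordinal n0.
have a10 : (0 < a 1)%N by apply: Hpos; rewrite leqnn.
have [p [p1 apM pM]] := prime_setup a10 a1m a1ne.
have idxb (l : 'I_n) : (1 <= r l + 1 <= r n)%N.
  have := @r_mono l.+1 n (ltn_ord l); rewrite rS.
  have r0 : r 0 = 0%N by [].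
  case: (posnP l) => [l0|l0]; first rewrite l0 r0 /=; lia.
have ca1 (l : 'I_n) : (a (r l + 1) %| a 1)%N.
  by apply: (chain_dec Hdec) => //; case/andP: (idxb l).
pose c (l : 'I_n) := if (l : nat) == 0%N then 1%N else a (r l + 1)%N.
pose G (l : 'I_n) : vec m.+2 n := if (l : nat) == 0%N then ones m.+2 n
   else [ffun j : 'I_n => if j == l then ((a (r l + 1)%N)%:R : 'Z_m.+2) else 0].
have -> : B1 m.+2 n a = [set G l | l : 'I_n].
  apply/eqP; rewrite eqEsubset; apply/andP; split; apply/subsetP => x.
    rewrite in_setU1 => /orP [/eqP -> | /imsetP [l l0 ->]].
      by apply/imsetP; exists o => //; rewrite /G /= eqxx.
    apply/imsetP; exists l => //; rewrite inE in l0.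
    have l0' : (l:nat) != 0%N by rewrite -lt0n.
    by rewrite /G (negbTE l0').
  move=> /imsetP [l _ ->]; rewrite /G; case: eqP => l0; first by rewrite setU11.
  rewrite setU1r //; apply/imsetP; exists l => //; rewrite inE lt0n; exact/eqP.
pose d (j : 'I_n) := (m.+2 %/ (c j * p.+1))%N.
have cj1 j : (c j %| a 1)%N by rewrite /c; case: eqP => _; [exact: dvd1n | exact: ca1].
apply: (@generic m n a G c (fun _ => o) d p) => //.
- move=> l i l' il; rewrite /G; case: eqP => l0.
    by rewrite !ffunE subrr; exact: ideal0.
  have ib := edge_le il (ltn_ord l').
  rewrite !ffunE; case: (eqVneq i l) il ib => [->|il0] il ib; case: (eqVneq l' l) => [el|nl].
  + by rewrite el ltnn in il.
  + rewrite subr0; apply: (@ideal_dvd _ _ (a (r l + 1)%N)); first exact: ideal_self.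
    apply: (chain_dec Hdec); [by case/andP: (idxb l) | | by case/andP: ib].
    rewrite /edge_index; have := r_mono (ltnW il); lia.
  + rewrite sub0r; apply: idealN; apply: (@ideal_dvd _ _ (a (r l + 1)%N)); first exact: ideal_self.
    apply: (chain_dec Hdec); [by case/andP: (idxb l) | | by case/andP: ib].
    rewrite /edge_index el; lia.
  + by rewrite subrr; exact: ideal0.
- move=> l i il; rewrite /G; case: eqP => l0; first by rewrite l0 in il.
  by rewrite ffunE; case: eqP => // ie; rewrite ie ltnn in il.
- move=> l; rewrite /G /c; case: eqP => l0; by rewrite ffunE ?eqxx.
- move=> l; rewrite /c; case: eqP => l0 //.
  apply/andP; split; first by apply: Hpos; exact: idxb.
  have := dvdn_leq a10 (ca1 l); have := dvdn_leq (isT : (0 < m.+2)%N) a1m; have a1ne' : (a 1%N <> m.+2)%N := a1ne; lia.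
- move=> f j fs; rewrite /c; case: eqP => j0; first by exists (f j); rewrite subr0 mulr1.
  have j0' : (0 < j)%N by rewrite lt0n; apply/eqP.
  have [z Hz] := fs o j j0'.
  rewrite /edge_index /= in Hz.
  by exists (- z); rewrite mulNr -Hz opprB.
- move=> l j; rewrite /G /c; case: eqP => l0.
    rewrite !ffunE; case: eqP => j0.
      rewrite ?subr0; have -> : j = l by apply: val_inj; rewrite /= j0 l0.
      by rewrite eqxx.
    rewrite subrr; case: eqP => // jl; by rewrite jl l0 in j0.
  have ol : (o == l) = false by apply/negbTE/eqP => ol; rewrite -ol in l0.
  by rewrite !ffunE ol if_same subr0.
- move=> j; rewrite /d mulnC divnK //.
  by apply: dvdn_trans apM; rewrite dvdn_pmul2r // cj1.
Qed.

Lemma part2 m n a :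
  (forall s, (1 <= s <= r n.+2)%N -> (0 < a s)%N) ->
  (forall s, (1 <= s < r n.+2)%N -> (a s %| a s.+1)%N) ->
  (a (r n.+2) %| m.+2)%N -> a (r n.+2) <> m.+2 ->
  min_flow_up_gen_set a (B2 m.+2 n.+2 a) /\ #|B2 m.+2 n.+2 a| = n.+2.
Proof.
move=> Hpos Hinc aNm aNne.
have rN : r n.+2 = (r n.+1 + n.+1)%N by rewrite rS.
have idxE (l : 'I_n.+2) : (0 < l)%N -> (r n.+2 - (n.+2 - l.+1) = r n.+1 + l)%N.
  move=> l0; have := ltn_ord l; rewrite rN; lia.
have idxb (l : 'I_n.+2) : (0 < l)%N -> (1 <= r n.+1 + l <= r n.+2)%N.
  move=> l0; have := ltn_ord l; rewrite rN; lia.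
have aN0 : (0 < a (r n.+2))%N by apply: Hpos; rewrite leqnn andbT rN; lia.
have caN (l : 'I_n.+2) : (0 < l)%N -> (a (r n.+1 + l) %| a (r n.+2))%N.
  by move=> l0; apply: (chain_inc Hinc) => //; case/andP: (idxb l l0).
have [p [p1 apM pM]] := prime_setup aN0 aNm aNne.
pose o : 'I_n.+2 := ord0.
pose Nn : 'I_n.+2 := ord_max.
pose c (l : 'I_n.+2) := if (l : nat) == 0%N then 1%N else a (r n.+2 - (n.+2 - l.+1))%N.
pose G (l : 'I_n.+2) : vec m.+2 n.+2 := if (l : nat) == 0%N then ones m.+2 n.+2
   else [ffun j : 'I_n.+2 => if (l <= j)%N then ((a (r n.+2 - (n.+2 - l.+1))%N)%:R : 'Z_m.+2) else 0].
have -> : B2 m.+2 n.+2 a = [set G l | l : 'I_n.+2].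
  apply/eqP; rewrite eqEsubset; apply/andP; split; apply/subsetP => x.
    rewrite in_setU1 => /orP [/eqP -> | /imsetP [l l0 ->]].
      by apply/imsetP; exists o => //; rewrite /G /= eqxx.
    apply/imsetP; exists l => //; rewrite inE in l0.
    have l0' : (l:nat) != 0%N by rewrite -lt0n.
    by rewrite /G (negbTE l0').
  move=> /imsetP [l _ ->]; rewrite /G; case: eqP => l0; first by rewrite setU11.
  rewrite setU1r //; apply/imsetP; exists l => //; rewrite inE lt0n; exact/eqP.
have pj (j : 'I_n.+2) : (j.-1 < n.+2)%N by apply: leq_ltn_trans (leq_pred j) (ltn_ord j).
pose pi (j : 'I_n.+2) : 'I_n.+2 := Ordinal (pj j).
pose d (j : 'I_n.+2) := (m.+2 %/ (c j * p.+1))%N.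
have cjN j : (c j %| a (r n.+2))%N.
  rewrite /c; case: eqP => j0; first exact: dvd1n.
  have j0' : (0 < j)%N by rewrite lt0n; apply/eqP.
  by rewrite idxE //; apply: caN.
apply: (@generic m n.+2 a G c pi d p) => //.
- move=> l i l' il; rewrite /G; case: eqP => l0.
    by rewrite !ffunE subrr; exact: ideal0.
  have l0' : (0 < l)%N by rewrite lt0n; apply/eqP.
  have ib := edge_le il (ltn_ord l').
  rewrite !ffunE; case: (leqP l i) => li.
    by rewrite (leq_trans li (ltnW il)) subrr; exact: ideal0.
  case: (leqP l l') => ll'; last by rewrite subrr; exact: ideal0.
  rewrite sub0r; apply: idealN; apply: (@ideal_dvd _ _ (a (r n.+2 - (n.+2 - l.+1))%N)); first exact: ideal_self.
  rewrite idxE //; apply: (chain_inc Hinc); [by case/andP: ib | | by case/andP: (idxb l l0')].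
  have := @r_mono l' n.+1; rewrite /edge_index; have := ltn_ord l'; lia.
- move=> l i il; rewrite /G; case: eqP => l0; first by rewrite l0 in il.
  by rewrite ffunE leqNgt il.
- move=> l; rewrite /G /c; case: eqP => l0; by rewrite ffunE ?leqnn.
- move=> l; rewrite /c; case: eqP => l0 //.
  have l0' : (0 < l)%N by rewrite lt0n; apply/eqP.
  rewrite idxE //; apply/andP; split; first by apply: Hpos; exact: idxb.
  have := dvdn_leq aN0 (caN l l0'); have := dvdn_leq (isT : (0 < m.+2)%N) aNm; lia.
- move=> f j fs; rewrite /c; case: eqP => j0; first by exists (f j); rewrite subr0 mulr1.
  have j0' : (0 < j)%N by rewrite lt0n; apply/eqP.
  rewrite idxE //; change (in_ideal_gen ((a (r n.+1 + j)%N)%:R : 'Z_m.+2) (f j - f (pi j))).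
  have pN : (pi j < Nn)%N by rewrite /pi /Nn /=; have := ltn_ord j; lia.
  have e1 := fs (pi j) Nn pN.
  have eidx : edge_index (pi j) Nn = (r n.+1 + j)%N by rewrite /edge_index /pi /Nn /=; lia.
  rewrite eidx in e1.
  case: (eqVneq j Nn) => [jN|jN].
    have -> : f j = f Nn by rewrite jN.
    by rewrite -opprB; apply: idealN.
  have jN' : (j < Nn)%N by move: jN; rewrite -val_eqE /Nn /= => jN; have := ltn_ord j; lia.
  have e2 := fs j Nn jN'.
  have -> : f j - f (pi j) = (f j - f Nn) - (f (pi j) - f Nn) by rewrite opprB addrA subrK.
  apply: idealB => //.
  apply: (@ideal_dvd _ _ (a (edge_index j Nn))) => //.
  rewrite /Nn /= in jN'; rewrite /edge_index /=; apply: (chain_inc Hinc); rewrite ?rN; lia.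
- move=> j j0; rewrite /pi /=; lia.
- move=> l j; rewrite /G /c; case: eqP => l0.
    rewrite !ffunE; case: eqP => j0.
      rewrite ?subr0; have -> : j = l by apply: val_inj; rewrite /= j0 l0.
      by rewrite eqxx.
    rewrite subrr; case: eqP => // jl; by rewrite jl l0 in j0.
  rewrite !ffunE; case: eqP => j0.
    have lj : (l <= j)%N = false by rewrite j0 leqn0; apply/eqP.
    rewrite subr0 lj; case: eqP => // jl; rewrite -jl in l0; by case: (l0 j0).
  rewrite /=; case: (ltngtP l j) => h.
  + have -> : (l <= j.-1)%N by lia.
    rewrite subrr; case: eqP => // jl; by rewrite jl ltnn in h.
  + have -> : (l <= j.-1)%N = false by lia.
    rewrite subrr; case: eqP => // jl; by rewrite jl ltnn in h.
  + have -> : (l <= j.-1)%N = false by lia.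
    rewrite subr0; have -> : j = l by apply: val_inj.
    by rewrite eqxx.
- move=> j; rewrite /d mulnC divnK //.
  by apply: dvdn_trans apM; rewrite dvdn_pmul2r // cjN.
Qed.

Theorem mainTheorem4 (m n : nat) (a : nat -> nat) :
  (1 < m)%N -> (2 <= n)%N ->
  (forall s : nat, (1 <= s <= r n)%N ->
     [/\ (0 < a s)%N, (a s %| m)%N & zero_divisor ((a s)%:R : 'Z_m)]) ->
  ((forall s : nat, (1 <= s < r n)%N -> (a s.+1 %| a s)%N) ->
     (a 1 %| m)%N -> a 1%N <> m ->
     min_flow_up_gen_set a (B1 m n a) /\ #|B1 m n a| = n)
  /\
  ((forall s : nat, (1 <= s < r n)%N -> (a s %| a s.+1)%N) ->
     (a (r n) %| m)%N -> a (r n) <> m ->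
     min_flow_up_gen_set a (B2 m n a) /\ #|B2 m n a| = n).
Proof.
case: m => [|[|m]] // m1.
case: n => [|[|n]] // n2 Ha.
have Hpos s : (1 <= s <= r n.+2)%N -> (0 < a s)%N by move=> h; case: (Ha s h).
split.
- by move=> Hdec a1m a1ne; apply: part1.
- by move=> Hinc aNm aNne; apply: part2.
Qed.
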